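(* For every $N\ge2$ and every $(n_0,\dots,n_N)$ the following hold: (R1) for every integer $0\le k\le n_{\min}$: $d_{(n_0,\dots,n_N)}(k)=d_{(n_0-k,\dots,n_N-k)}(0)$; (R2) for every $i\in\{1,\dots,N-1\}$: $d_{(n_0,\dots,n_N)}(0)=\min_{j}\big[d_{(n_0,\dots,n_i)}(j)+d_{(j,n_{i+1},\dots,n_N)}(0)\big]$, the minimum over integers $0\le j\le\min(n_0,\dots,n_i)$; (R3) for every $i\in\{1,\dots,N-1\}$ and integer $0\le k\le n_{\min}$: $d_{(n_0,\dots,n_N)}(k)=\min_{j}\big[d_{(n_0,\dots,n_i)}(j)+d_{(j,n_{i+1},\dots,n_N)}(k)\big]$, the minimum over integers $k\le j\le\min(n_0,\dots,n_i)$.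
   Context: For a vector $\mathbf n=(n_0,\dots,n_N)$ of positive integers ($N\ge1$), let $\tilde n_0\le\cdots\le\tilde n_N$ be its nondecreasing rearrangement, $n_{\min}=\tilde n_0$, $c_i=1-i+\min_{k'=1,\dots,N}\lfloor(\sum_{l=0}^{k'}\tilde n_l-i)/k'\rfloor$ for $i=1,\dots,n_{\min}$, and $d_{\mathbf n}(k)=\sum_{i=k+1}^{n_{\min}}c_i$ for integers $0\le k\le n_{\min}$ (so $d_{\mathbf n}(n_{\min})=0$). This $d_{\mathbf n}$ is the diversity-multiplexing tradeoff (at integer points) of the $(n_0,\dots,n_N)$ Rayleigh product channel $\mathbf y=\sqrt{\mathsf{SNR}/(n_1\cdots n_N)}\mathbf H_1\cdots\mathbf H_N\mathbf x+\mathbf z$ with independent i.i.d. $\mathcal{CN}(0,1)$ matrices $\mathbf H_i\in\mathbb C^{n_{i-1}\times n_i}$. Convention: if some entry of $\mathbf n$ is $0$, then $d_{\mathbf n}(0)=0$. *)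

(* Defs.v *)
From HB Require Import structures.
From mathcomp Require Import all_boot all_order all_algebra.
Set Implicit Arguments. Unset Strict Implicit. Unset Printing Implicit Defensive.
Import Order.TTheory GRing.Theory Num.Theory.
Local Open Scope ring_scope.

(* A vector n = (n_0,...,n_N) is a seq nat of size N+1. *)

(* minimum of a (nonempty) list of integers; 0 on the empty list (never used). *)
Definition minl (l : seq int) : int :=
  match l with [::] => 0 | x :: t => foldr Num.min x t end.

Definition srt (n : seq nat) : seq nat := sort leq n.

Definition nmin (n : seq nat) : nat := head 0%N (srt n).

Definition cval (n : seq nat) (i : nat) : int :=
  let N := (size n).-1 in
  1 - i%:Z + minl [seq (((\sum_(l < k'.+1) nth 0%N (srt n) l)%:Z - i%:Z) %/ k'%:Z)%Z
                   | k' <- iota 1 N].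

Definition dmt (n : seq nat) (k : nat) : int :=
  \sum_(k.+1 <= i < (nmin n).+1) cval n i.

(* Main.v *)
Require Import Defs.
From HB Require Import structures.
From mathcomp Require Import all_boot all_order all_algebra.
From Stdlib Require ZArith.
From Stdlib Require Import Lia.
Import Order.TTheory GRing.Theory Num.Theory.
Set Implicit Arguments. Unset Strict Implicit. Unset Printing Implicit Defensive.
Local Open Scope ring_scope.

Module ZB.
Import ZArith Lia.
Definition toZ (x : int) : Z :=
  match x with Posz n => Z.of_nat n | Negz n => (- Z.of_nat n.+1)%Z end.

Lemma toZ_nat n : toZ n%:Z = Z.of_nat n. Proof. by []. Qed.
Lemma toZ0 : toZ 0 = 0%Z. Proof. by []. Qed.
Lemma toZ1 : toZ 1 = 1%Z. Proof. by []. Qed.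

Lemma toZN x : toZ (- x) = (- toZ x)%Z.
Proof. case: x => [[|n]|n] //=; lia. Qed.

Local Arguments Z.add : simpl never.
Local Arguments Z.of_nat : simpl never.
Local Arguments Z.opp : simpl never.
Lemma toZD x y : toZ (x + y) = (toZ x + toZ y)%Z.
Proof.
case: x => m; case: y => n;
rewrite /GRing.add /= /intZmod.addz /=; try case: ltnP => /ssrnat.leP H /=;
rewrite /addn /subn; lia.
Qed.

Lemma toZM x y : toZ (x * y) = (toZ x * toZ y)%Z.
Proof.
case: x => m; case: y => n; rewrite ?NegzE ?mulrN ?mulNr ?opprK ?toZN -?PoszM.
all: rewrite /toZ /muln Nat2Z.inj_mul; ring.
Qed.

Lemma toZ_le x y : (x <= y) = (toZ x <=? toZ y)%Z.
Proof.
case: x => m; case: y => n; rewrite ?NegzE ?lerN2 ?toZN; rewrite /toZ.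
all: rewrite ?ltez_natE.
all: case: Z.leb_spec0 => H.
- by apply/ssrnat.leP; lia.
- by apply/negbTE/negP => /ssrnat.leP; lia.
- lia.
- by rewrite andbF.
- done.
- lia.
- by apply/ssrnat.leP; lia.
- by apply/negbTE/negP => /ssrnat.leP; lia.
Qed.

Lemma toZ_inj x y : toZ x = toZ y -> x = y.
Proof.
move=> H; apply/eqP; rewrite eq_le !toZ_le H; apply/andP; split; apply/Z.leb_le; lia.
Qed.

Lemma zleI x y : x <= y -> (toZ x <= toZ y)%Z.
Proof. by rewrite toZ_le => /Z.leb_le. Qed.
Lemma zleE x y : (toZ x <= toZ y)%Z -> x <= y.
Proof. by rewrite toZ_le => /Z.leb_le. Qed.
Lemma zltI x y : x < y -> (toZ x < toZ y)%Z.
Proof. rewrite lt_neqAle toZ_le => /andP[H /Z.leb_le H2]; have: toZ x <> toZ y.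
  by move=> E; move/eqP: H; apply; apply: toZ_inj.
lia. Qed.
Lemma zltE x y : (toZ x < toZ y)%Z -> x < y.
Proof. move=> H; rewrite lt_neqAle toZ_le; apply/andP; split; last by apply/Z.leb_le; lia.
by apply/eqP => E; rewrite E in H; lia. Qed.
Lemma zeqI x y : x = y -> toZ x = toZ y. Proof. by move->. Qed.
Lemma zleNI x y : ~~ (x <= y) -> (toZ y < toZ x)%Z.
Proof. by rewrite -ltNge => /zltI. Qed.
Lemma zltNI x y : ~~ (x < y) -> (toZ y <= toZ x)%Z.
Proof. by rewrite -leNgt => /zleI. Qed.

Ltac zpush := rewrite ?(toZD, toZN, toZM, toZ_nat, toZ0, toZ1) ?/addn ?/subn ?/muln.
Ltac zpush_in H := rewrite ?(toZD, toZN, toZM, toZ_nat, toZ0, toZ1) ?/addn ?/subn ?/muln in H.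
Ltac zhyp := repeat match goal with
  | H : (_ <= _)%O = false |- _ => move/negbT: H => H
  | H : (_ < _)%O = false |- _ => move/negbT: H => H
  | H : (_ <= _)%N = false |- _ => move/negbT: H => H
  | H : (_ <= _)%O = true |- _ => change (is_true (_ <= _)%O) in H
  | H : (_ < _)%O = true |- _ => change (is_true (_ < _)%O) in H
  | H : is_true (leq _ _) |- _ => move/ssrnat.leP: H => H
  | H : is_true (~~ leq _ _) |- _ => rewrite -ltnNge in H; move/ssrnat.leP: H => H
  | H : is_true (@Order.le _ _ _ _) |- _ => move/zleI: H => H; zpush_in H
  | H : is_true (@Order.lt _ _ _ _) |- _ => move/zltI: H => H; zpush_in H
  | H : is_true (~~ (@Order.le _ _ _ _)) |- _ => move/zleNI: H => H; zpush_in H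
  | H : is_true (~~ (@Order.lt _ _ _ _)) |- _ => move/zltNI: H => H; zpush_in H
  | H : @eq int _ _ |- _ => move/zeqI: H => H; zpush_in H
  end.
Ltac zgoal := match goal with
  | |- is_true (leq _ _) => apply/ssrnat.leP
  | |- is_true (_ <= _) => apply: zleE
  | |- is_true (_ < _) => apply: zltE
  | |- @eq int _ _ => apply: toZ_inj
  | _ => idtac end.
Ltac zrevert := repeat match goal with
  | H : BinInt.Z.le _ _ |- _ => revert H
  | H : BinInt.Z.lt _ _ |- _ => revert H
  | H : @eq BinNums.Z _ _ |- _ => revert H
  end.
Ltac zatoms := repeat match goal with
  | |- context [toZ ?a] => let x := fresh "zt" in set x := toZ a; clearbody x
  end.
Ltac zlia := intros; try (by []); zhyp; zgoal; zpush; zrevert; zatoms; intros; try unfold addn, subn, muln in *; lia.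
End ZB.
Import ZB.

Definition pp (z : int) : int := if 0 <= z then z else 0.
Lemma pp_ge0 z : 0 <= pp z. Proof. by rewrite /pp; case: ifP. Qed.
Lemma pp_ge z : z <= pp z. Proof. rewrite /pp; case: ifP => // /negbT H; zlia. Qed.
Lemma pp_id z : 0 <= z -> pp z = z. Proof. by rewrite /pp => ->. Qed.
Lemma pp_0 z : z <= 0 -> pp z = 0.
Proof. rewrite /pp; case: ifP => // H1 H2; zlia. Qed.

Definition psi_def (n : seq nat) (y : nat) : int :=
  Posz y - \sum_(x <- n) pp (Posz y - Posz x).
Fact psi_key : unit. Proof. exact: tt. Qed.
Definition psi := locked_with psi_key psi_def.
Lemma psiU n y : psi n y = Posz y - \sum_(x <- n) pp (Posz y - Posz x).
Proof. by rewrite /psi unlock. Qed.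

Lemma psi_perm n m y : perm_eq n m -> psi n y = psi m y.
Proof. by move=> H; rewrite !psiU (perm_big _ H). Qed.

Lemma sum_pp_ge0 (n : seq nat) y : 0 <= \sum_(x <- n) pp (Posz y - Posz x).
Proof. by apply: sumr_ge0 => x _; apply: pp_ge0. Qed.

Lemma sum_pp_mem (n : seq nat) y x : x \in n ->
  pp (Posz y - Posz x) <= \sum_(z <- n) pp (Posz y - Posz z).
Proof.
elim: n => [|z n IH] //; rewrite inE big_cons => /orP[/eqP<-|H].
  have := sum_pp_ge0 n y; zlia.
have := IH H; have := pp_ge0 (Posz y - Posz z); zlia.
Qed.

Lemma psi_le_y n y : psi n y <= Posz y.
Proof. rewrite !psiU; have := sum_pp_ge0 n y; zlia. Qed.

Lemma psi_le_x n y x : x \in n -> psi n y <= Posz x.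
Proof. move=> H0; rewrite !psiU; move: H0 => H; have := sum_pp_mem y H; have := pp_ge (Posz y - Posz x); zlia. Qed.

Lemma psi_nonpos n y : (2 <= size n)%N -> (sumn n <= y)%N -> psi n y <= 0.
Proof.
case: n => [|x1 [|x2 r]] //= _ Hy.
rewrite !psiU !big_cons.
have := sum_pp_ge0 r y; have := pp_ge (Posz y - Posz x1); have := pp_ge (Posz y - Posz x2).
zlia.
Qed.

Lemma psi_cat n m y : psi (n ++ m) y = psi n y - \sum_(x <- m) pp (Posz y - Posz x).
Proof. by rewrite !psiU big_cat /= opprD addrA. Qed.

Lemma srt_sorted n : sorted leq (srt n).
Proof. exact: (sort_sorted leq_total). Qed.

Lemma nmin_le n x : x \in n -> (nmin n <= x)%N.
Proof.
rewrite -(mem_sort leq) /nmin /srt.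
have := srt_sorted n; rewrite /srt.
case: (sort leq n) => [|h t] //= Hs; rewrite inE => /orP[/eqP->//|Hx].
have := order_path_min leq_trans Hs => /allP; apply; done.
Qed.

Lemma nmin_in n : n != [::] -> nmin n \in n.
Proof.
move=> Hn; rewrite -(mem_sort leq) /nmin /srt.
have : size (sort leq n) = size n by rewrite size_sort.
case: (sort leq n) => [|h t] /=; last by rewrite mem_head.
by case: n Hn.
Qed.
Lemma foldr_min_ge (y x : int) t :
  (y <= foldr Num.min x t) = (y <= x) && all (fun z => y <= z) t.
Proof.
elim: t => [|z t IH] /=; first by rewrite andbT.
by rewrite le_min IH andbCA.
Qed.

Lemma foldr_min_le (y x : int) t :
  (foldr Num.min x t <= y) = (x <= y) || has (fun z => z <= y) t.
Proof.
elim: t => [|z t IH] /=; first by rewrite orbF.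
by rewrite ge_min IH orbCA.
Qed.

Lemma minl_le (l : seq int) x : x \in l -> minl l <= x.
Proof.
case: l => [|z t] //= Hx.
rewrite foldr_min_le; rewrite inE in Hx; case/orP: Hx => [/eqP->|Hx].
  by rewrite lexx.
by apply/orP; right; apply/hasP; exists x.
Qed.

Lemma minl_char (l : seq int) v :
  (forall x, x \in l -> v <= x) -> (exists2 x, x \in l & x <= v) -> minl l = v.
Proof.
case: l => [|z t] Hall [w Hw Hwv]; first by rewrite in_nil in Hw.
apply/eqP; rewrite eq_le; apply/andP; split.
  have H1 := minl_le Hw; exact: (le_trans H1 Hwv).
rewrite /= foldr_min_ge Hall ?mem_head //=.
by apply/allP => u Hu; apply: Hall; rewrite inE Hu orbT.
Qed.

Lemma minl_ex (l : seq int) : l != [::] -> exists2 x, x \in l & minl l = x.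
Proof.
case: l => [|z t] // _; exists (minl (z :: t)) => //.
rewrite /=; elim: t => [|w t IH] /=; first by rewrite mem_head.
rewrite minEle; case: ifP => _; first by rewrite !inE eqxx orbT.
move: IH; rewrite !inE => /orP[->//|->]; by rewrite !orbT.
Qed.

Definition Ssum (n : seq nat) (k : nat) : nat := \sum_(l < k.+1) nth 0%N (srt n) l.
Definition Yv (n : seq nat) (i : nat) : int :=
  minl [seq ((Posz (Ssum n k') - Posz i) %/ Posz k')%Z | k' <- iota 1 (size n).-1].

Lemma cvalE n i : cval n i = 1 - Posz i + Yv n i.
Proof. by []. Qed.

Lemma le_minl_map (f : nat -> int) (L : seq nat) y : L != [::] ->
  (y <= minl [seq f k | k <- L]) = all (fun k => y <= f k) L.
Proof.
case: L => [|k0 t] //= _; rewrite foldr_min_ge all_map; congr andb.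
Qed.

Lemma le_Yv n i (y : int) : (1 < size n)%N ->
  (y <= Yv n i) = all (fun k => y * Posz k <= Posz (Ssum n k) - Posz i) (iota 1 (size n).-1).
Proof.
move=> Hs; rewrite /Yv le_minl_map; last by case: (size n) Hs => [|[|m]].
apply: eq_in_all => k; rewrite mem_iota => /andP[Hk _].
by rewrite lez_divRL // ltz_nat.
Qed.

Lemma sum_sub_nat (f : nat -> nat) (y K : nat) :
  \sum_(0 <= l < K) (Posz y - Posz (f l)) = Posz (y * K) - Posz (\sum_(0 <= l < K) f l).
Proof.
elim: K => [|K IH]; first by rewrite !big_nil muln0.
rewrite !big_nat_recr //= IH mulnS; zlia.
Qed.

Lemma sum_prefix_le (F : nat -> int) a b : (a <= b)%N -> (forall l, 0 <= F l) ->
  \sum_(0 <= l < a) F l <= \sum_(0 <= l < b) F l.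
Proof.
move=> Hab HF; elim: b Hab => [|b IH]; first by rewrite leqn0 => /eqP->.
rewrite leq_eqVlt => /orP[/eqP->//|Hab].
rewrite big_nat_recr //=; have := IH Hab; have := HF b; zlia.
Qed.

Lemma prefix_pp (s : seq nat) (y : nat) : sorted leq s -> forall K, (K < size s)%N ->
  \sum_(0 <= l < K.+1) pp (Posz y - Posz (nth 0%N s l)) = 0 \/
  exists2 k, (k <= K)%N &
  \sum_(0 <= l < K.+1) pp (Posz y - Posz (nth 0%N s l)) =
  \sum_(0 <= l < k.+1) (Posz y - Posz (nth 0%N s l)).
Proof.
move=> Hs; elim => [|K IH] HK.
  rewrite !big_nat1 /pp; case: ifP => _; [right; exists 0%N => //|by left].
  by rewrite big_nat1.
case: (leqP y (nth 0%N s K.+1)) => Hy.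
  rewrite big_nat_recr //= pp_0; last by zlia.
  rewrite addr0; case: (IH (ltnW HK)) => [->|[k Hk ->]]; first by left.
  by right; exists k => //; apply: leqW.
right; exists K.+1 => //; apply: eq_big_nat => l /andP[_ Hl].
rewrite pp_id //.
have: (nth 0%N s l <= nth 0%N s K.+1)%N.
  by apply: (sorted_leq_nth leq_trans leqnn) => //; rewrite inE; apply: leq_ltn_trans HK.
zlia.
Qed.

Lemma K1 n i y : (1 < size n)%N -> (1 <= i <= nmin n)%N ->
  (Posz i <= psi n y) = (i <= y)%N && (Posz y <= Yv n i).
Proof.
move=> Hs /andP[Hi1 Him].
have Hperm : perm_eq (srt n) n by rewrite /srt perm_sort.
rewrite -(psi_perm y Hperm) le_Yv //.
set s := srt n.
have Hss : sorted leq s by apply: srt_sorted.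
have Hsz : size s = size n by rewrite size_sort.
have Hs0 : nth 0%N s 0 = nmin n by rewrite /nmin nth0.
have psiE : psi s y = Posz y - \sum_(0 <= l < (size n).-1.+1) pp (Posz y - Posz (nth 0%N s l)).
  by rewrite !psiU (big_nth 0%N) Hsz prednK //; apply: ltnW.
have SsE : forall k, Posz (Ssum n k) = Posz (\sum_(0 <= l < k.+1) nth 0%N s l).
  by move=> k; rewrite /Ssum big_mkord.
apply/idP/idP.
- move=> H; apply/andP; split.
    by have := psi_le_y s y; rewrite -lez_nat; zlia.
  apply/allP => k; rewrite mem_iota => /andP[Hk1 Hk2].
  rewrite SsE.
  have Hk : (k.+1 <= (size n).-1.+1)%N by rewrite add1n -ltnS in Hk2.
  move: H; rewrite psiE.
  have H3 := @sum_prefix_le (fun l => pp (Posz y - Posz (nth 0%N s l))) _ _ Hk (fun l => pp_ge0 _).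
  have H1 : \sum_(0 <= l < k.+1) (Posz y - Posz (nth 0%N s l)) <=
            \sum_(0 <= l < k.+1) pp (Posz y - Posz (nth 0%N s l)).
    by apply: ler_sum => l _; apply: pp_ge.
  move: H1; rewrite sum_sub_nat mulnS; zlia.
- case/andP => Hiy /allP Hall.
  rewrite psiE.
  have := @prefix_pp s y Hss (size n).-1; rewrite Hsz prednK; last by apply: ltnW.
  case => // [->|[k Hk ->]]; first by rewrite subr0 lez_nat.
  case: k Hk => [|k] Hk.
    rewrite big_nat1 Hs0; zlia.
  have : k.+1 \in iota 1 (size n).-1 by rewrite mem_iota add1n ltnS.
  move/Hall; rewrite SsE.
  rewrite sum_sub_nat; zlia.
Qed.

Definition ind (b : bool) : int := if b then 1 else 0.

Lemma count_int (lo hi : int) (k M : nat) : Posz k <= lo -> hi <= Posz M ->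
  \sum_(k <= t < M) ind ((lo <= Posz t) && (Posz t < hi)) = pp (hi - lo).
Proof.
move=> Hk; elim: M hi => [|M IH] hi Hhi.
  by rewrite big_geq // pp_0 //; zlia.
case: (leqP k M) => HkM; last first.
  by rewrite big_geq // pp_0 //; zlia.
rewrite big_nat_recr //=.
case: (lerP hi (Posz M)) => HhM.
  rewrite IH // /ind; case: ifP => [/andP[_ H]|_]; first by zlia.
  by rewrite addr0.
have Hh : hi = Posz M + 1 by zlia.
have -> : \sum_(k <= t < M) ind ((lo <= Posz t) && (Posz t < hi)) =
          \sum_(k <= t < M) ind ((lo <= Posz t) && (Posz t < Posz M)).
  apply: eq_big_nat => t /andP[_ Ht]; rewrite Hh ltz_nat Ht.
  by have -> : (Posz t < Posz M + 1) by zlia.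
rewrite (IH (Posz M)) // /ind; case: ifP => [/andP[H1 _]|/negbT H].
  rewrite !pp_id; zlia.
have H2 : ~~ (lo <= Posz M) by apply: contra H => ->.
rewrite !pp_0; zlia.
Qed.

Lemma psi_at_min n : psi n (nmin n) = Posz (nmin n).
Proof.
rewrite !psiU big1_seq ?subr0 // => x /andP[_ Hx].
apply: pp_0; have := nmin_le Hx; zlia.
Qed.

Lemma mem_le_sumn (n : seq nat) x : x \in n -> (x <= sumn n)%N.
Proof.
elim: n => [|z t IH] //=; rewrite inE => /orP[/eqP<-|/IH H]; first exact: leq_addr.
exact: leq_trans H (leq_addl _ _).
Qed.

Lemma Yv_bounds n i : (1 < size n)%N -> (1 <= i <= nmin n)%N ->
  Posz (nmin n) <= Yv n i /\ Yv n i < Posz (sumn n).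
Proof.
move=> Hs Hi; have Hi' := Hi; case/andP: Hi' => Hi1 Him.
have Hmn : (nmin n <= sumn n)%N.
  apply: mem_le_sumn; apply: nmin_in; by case: (n) Hs.
split.
  have := K1 (nmin n) Hs Hi; rewrite psi_at_min lez_nat Him => /esym/andP[_ ->] //.
rewrite ltNge; apply/negP => H.
have := K1 (sumn n) Hs Hi; rewrite H (leq_trans Him Hmn) /= => /idP.
have := psi_nonpos Hs (leqnn (sumn n)); zlia.
Qed.

Lemma cval_count n i B : (1 < size n)%N -> (1 <= i <= nmin n)%N -> (sumn n <= B)%N ->
  cval n i = \sum_(0 <= y < B) ind (Posz i <= psi n y).
Proof.
move=> Hs Hi HB; have [Hl Hu] := Yv_bounds Hs Hi.
have Hi' := Hi; case/andP: Hi' => Hi1 Him.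
transitivity (\sum_(0 <= y < B) ind ((Posz i <= Posz y) && (Posz y < Yv n i + 1))).
  rewrite count_int //; last by move: Hu; zlia.
  rewrite cvalE pp_id; zlia.
apply: eq_big_nat => y _; by rewrite K1 // lez_nat ltzD1.
Qed.

Lemma dmtD n k B : (1 < size n)%N -> (sumn n <= B)%N ->
  dmt n k = \sum_(0 <= y < B) pp (psi n y - Posz k).
Proof.
move=> Hs HB; rewrite /dmt.
transitivity (\sum_(k.+1 <= i < (nmin n).+1) \sum_(0 <= y < B) ind (Posz i <= psi n y)).
  apply: eq_big_nat => i /andP[H1 H2]; apply: cval_count => //.
  by apply/andP; split; [apply: leq_trans H1|rewrite -ltnS].
rewrite exchange_big_nat; apply: eq_big_nat => y _.
transitivity (\sum_(k.+1 <= i < (nmin n).+1)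
                ind ((Posz k.+1 <= Posz i) && (Posz i < psi n y + 1))).
  by apply: eq_big_nat => i /andP[H1 _]; rewrite ltzD1 lez_nat H1.
have Hm : psi n y <= Posz (nmin n) by apply: psi_le_x; apply: nmin_in; case: (n) Hs.
rewrite count_int //; last by zlia.
congr pp; zlia.
Qed.

Lemma psi_shift n k y : (forall x, x \in n -> (k <= x)%N) ->
  psi [seq (x - k)%N | x <- n] y = psi n (y + k) - Posz k.
Proof.
move=> Hk; rewrite !psiU big_map.
have -> : \sum_(x <- n) pp (Posz y - Posz (x - k)) = \sum_(x <- n) pp (Posz (y + k) - Posz x).
  rewrite big_seq_cond [RHS]big_seq_cond; apply: eq_bigr => x /andP[Hx _].
  congr pp; have := Hk x Hx; zlia.
zlia.
Qed.

Lemma dmt_shift n k j : (1 < size n)%N -> (k <= nmin n)%N ->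
  dmt [seq (x - k)%N | x <- n] j = dmt n (j + k).
Proof.
move=> Hs Hk.
have Hk' : forall x, x \in n -> (k <= x)%N by move=> x Hx; apply: leq_trans Hk (nmin_le Hx).
have Hsm : (sumn [seq (x - k)%N | x <- n] <= sumn n)%N.
  elim: (n) => [|x t IH] //=; apply: leq_add => //; apply: leq_subr.
rewrite (dmtD j (B := sumn n)) ?size_map //.
rewrite (dmtD (j + k) (B := sumn n + k)) ?leq_addr //.
rewrite [RHS](big_cat_nat (n := k)) ?leq_addl //=.
rewrite [\sum_(0 <= i < k) _]big1_seq ?add0r; last first.
  move=> y /andP[_]; rewrite mem_index_iota => /andP[_ Hy].
  apply: pp_0; have := psi_le_y n y; zlia.
have -> : \sum_(k <= i < sumn n + k) pp (psi n i - Posz (j + k)) =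
          \sum_(0 <= i < sumn n) pp (psi n (i + k) - Posz (j + k)).
  by rewrite -{1}[k]add0n big_addn addnK.
apply: eq_big_nat => y _; rewrite psi_shift //; congr pp; zlia.
Qed.

Lemma sum_const_Posz (x m n : nat) : (m <= n)%N ->
  \sum_(m <= i < n) Posz x = Posz ((n - m) * x).
Proof.
elim: n => [|n IH] Hmn; first by rewrite leqn0 in Hmn; move/eqP: Hmn => ->; rewrite big_geq.
case: (ltngtP m n.+1) Hmn => // [Hlt|->] _; last by rewrite big_geq // subnn.
by rewrite big_nat_recr //= IH // subSn // mulSn PoszD addrC.
Qed.

Lemma sum_le_nat (F G : nat -> int) m n : (forall i, (m <= i < n)%N -> F i <= G i) ->
  \sum_(m <= i < n) F i <= \sum_(m <= i < n) G i.
Proof.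
move=> H; rewrite big_seq_cond [X in _ <= X]big_seq_cond; apply: ler_sum => i.
by rewrite mem_index_iota andbT => /H.
Qed.

Lemma seq_min (c : nat -> int) (Q k M : nat) : (k <= M)%N ->
  (forall i1 i2, (k < i1 <= i2)%N -> (i2 <= M)%N -> c i2 <= c i1) ->
  \sum_(k.+1 <= i < M.+1) Num.min (c i) (Posz Q) =
  minl [seq \sum_(j.+1 <= i < M.+1) c i + Posz ((j - k) * Q) | j <- iota k (M - k).+1].
Proof.
move=> HkM Hmono; symmetry; apply: minl_char.
- move=> x /mapP[j]; rewrite mem_iota addnS subnKC // ltnS => /andP[Hkj HjM] ->.
  rewrite (big_cat_nat (n := j.+1)) //= addrC; apply: lerD.
    by apply: sum_le_nat => i _; rewrite ge_min lexx.
  have -> : Posz ((j - k) * Q) = \sum_(k.+1 <= i < j.+1) Posz Q by rewrite sum_const_Posz // subSS.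
  by apply: sum_le_nat => i _; rewrite ge_min lexx orbT.
-
  suff [j Hj HE] : exists2 j, (k <= j <= M)%N &
      \sum_(k.+1 <= i < M.+1) Num.min (c i) (Posz Q) =
      \sum_(j.+1 <= i < M.+1) c i + Posz ((j - k) * Q).
    exists (\sum_(j.+1 <= i < M.+1) c i + Posz ((j - k) * Q)); last by rewrite HE.
    apply/mapP; exists j => //; rewrite mem_iota addnS subnKC // ltnS //.
  move: Hmono; move Hd : (M - k)%N => d.
  elim: d k Hd HkM => [|d IH] k Hd HkM Hmono.
    have Hk : k = M by apply/eqP; rewrite eqn_leq HkM -subn_eq0 Hd.
    subst k; exists M; first by rewrite leqnn.
    by rewrite !big_geq // subnn mul0n addr0.
  have HkM' : (k < M)%N by rewrite -subn_gt0 Hd.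
  rewrite big_ltn ?ltnS //.
  case: (ltrP (c k.+1) (Posz Q)) => HcQ.
    exists k; first by rewrite leqnn.
    rewrite subnn mul0n addr0 [RHS]big_ltn ?ltnS //.
    apply: (congr2 +%R) => //.
    apply: eq_big_nat => i /andP[H1 H2]; rewrite min_l //.
    apply: le_trans (ltW HcQ); apply: Hmono; [by rewrite ltnS leqnn ltnW | by rewrite -ltnS].
  have [j Hj HE] : exists2 j, (k.+1 <= j <= M)%N &
      \sum_(k.+2 <= i < M.+1) Num.min (c i) (Posz Q) =
      \sum_(j.+1 <= i < M.+1) c i + Posz ((j - k.+1) * Q).
    apply: IH => //; first by rewrite subnS Hd.
    by move=> i1 i2 /andP[H1 H2] H3; apply: Hmono => //; rewrite H2 andbT ltnW.
  exists j; first by case/andP: Hj => H1 ->; rewrite andbT ltnW.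
  case/andP: Hj => Hj1 _.
  rewrite HE addrA [Posz Q + _]addrC -addrA; congr (_ + _).
  rewrite -PoszD; congr Posz.
  by rewrite subnS -[(j - k)%N](@prednK) ?subn_gt0 // mulSn addnC.
Qed.

Lemma cval_mono a i1 i2 : (1 < size a)%N -> (i1 <= i2)%N -> cval a i2 <= cval a i1.
Proof.
move=> Hs H12; rewrite !cvalE.
have : Yv a i2 <= Yv a i1.
  rewrite le_Yv //; apply/allP => k' Hk'.
  have := lexx (Yv a i2); rewrite le_Yv // => /allP /(_ k' Hk').
  move: H12; zlia.
move: H12; zlia.
Qed.

Lemma psi_rcons a q y : psi (rcons a q) y = psi a y - pp (Posz y - Posz q).
Proof. by rewrite -cats1 psi_cat big_seq1. Qed.

Lemma sumn_rcons a q : sumn (rcons a q) = (sumn a + q)%N.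
Proof. by rewrite -cats1 sumn_cat /= addn0. Qed.

Lemma peel a q k : (1 < size a)%N -> (k <= nmin a)%N -> (k <= q)%N ->
  dmt (rcons a q) k =
  minl [seq dmt a j + Posz ((j - k) * (q - k)) | j <- iota k (nmin a - k).+1].
Proof.
move=> Hs HkM Hkq.
have Hsr : (1 < size (rcons a q))%N by rewrite size_rcons; apply: ltnW.
have Hmem : nmin a \in a by apply: nmin_in; case: (a) Hs.
rewrite (dmtD k (B := sumn (rcons a q))) //.
pose M := nmin a; pose B := sumn (rcons a q).
have HB : (sumn a <= B)%N by rewrite /B sumn_rcons leq_addr.
transitivity (\sum_(0 <= y < B) \sum_(k <= t < M)
   ind ((Posz k + pp (Posz y - Posz q) <= Posz t) && (Posz t < psi a y))).
  apply: eq_big_nat => y _; rewrite count_int; last first.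
  - by apply: psi_le_x.
  - by have := pp_ge0 (Posz y - Posz q); zlia.
  by rewrite psi_rcons; congr pp; zlia.
rewrite exchange_big_nat.
transitivity (\sum_(k <= t < M) Num.min (cval a t.+1) (Posz (q - k))).
  apply: eq_big_nat => t /andP[Hkt HtM].
  have Hi : (1 <= t.+1 <= nmin a)%N by [].
  have [Hl Hu] := Yv_bounds Hs Hi.
  transitivity (\sum_(0 <= y < B) ind ((Posz t.+1 <= Posz y) &&
      (Posz y < Num.min (Yv a t.+1 + 1) (Posz (t.+1 + q - k))))).
    apply: eq_big_nat => y _; congr ind.
    have Et : (Posz t < psi a y) = (Posz t.+1 <= psi a y) by apply/idP/idP; zlia.
    have E2 : (Posz k + pp (Posz y - Posz q) <= Posz t) = (Posz y < Posz (t.+1 + q - k)).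
      by rewrite /pp; case: ifP => H; apply/idP/idP; zlia.
    rewrite E2 Et K1 // lt_min ltzD1 lez_nat.
    by rewrite [RHS]andbA andbC.
  rewrite count_int //; last first.
    rewrite ge_min; apply/orP; left; move: Hu HB; zlia.
  rewrite cvalE.
  case: (lerP (Yv a t.+1 + 1) (Posz (t.+1 + q - k))) => H1;
  case: (lerP (1 - Posz t.+1 + Yv a t.+1) (Posz (q - k))) => H2;
  (rewrite pp_id; [zlia|zlia]).
have -> : \sum_(k <= t < M) Num.min (cval a t.+1) (Posz (q - k)) =
          \sum_(k.+1 <= i < M.+1) Num.min (cval a i) (Posz (q - k)) by rewrite big_add1.
rewrite seq_min //.
by move=> i1 i2 /andP[H1 H2] _; apply: cval_mono.
Qed.

Ltac znia := intros; try (by []); zhyp; zgoal; zpush; zrevert; zatoms; intros;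
  try unfold addn, subn, muln in *; nia.

Lemma le_nmin (l : seq nat) x : l != [::] -> (x <= nmin l)%N = all (leq x) l.
Proof.
move=> Hl; apply/idP/allP => [H y Hy|H]; first exact: leq_trans H (nmin_le Hy).
exact: H (nmin_in Hl).
Qed.

Lemma mem_iota_rng j k m : (k <= m)%N -> (j \in iota k (m - k).+1) = (k <= j <= m)%N.
Proof. by move=> H; rewrite mem_iota addnS subnKC // ltnS. Qed.

Lemma nmin_pair p q : nmin [:: p; q] = minn p q.
Proof.
apply/eqP; rewrite eqn_leq; apply/andP; split.
  by rewrite leq_min !nmin_le ?inE ?eqxx ?orbT.
have := nmin_in (n := [:: p; q]) isT; rewrite !inE => /orP[]/eqP->.
  exact: geq_minl. exact: geq_minr.
Qed.

Lemma cval_pair p q i : cval [:: p; q] i = 1 - Posz i + (Posz (p + q) - Posz i).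
Proof.
rewrite cvalE /Yv /= divz1 /Ssum; congr (_ + (Posz _ - _)).
have Hp : perm_eq (srt [:: p; q]) [:: p; q] by rewrite /srt perm_sort.
rewrite big_ord_recr big_ord1 /=.
move: (perm_size Hp) (perm_sumn Hp) => /=.
case: (srt [:: p; q]) => [|x [|y [|z r]]] //= _; by rewrite !addn0.
Qed.

Lemma dmt_pair p q k : (k <= minn p q)%N -> dmt [:: p; q] k = Posz ((p - k) * (q - k)).
Proof.
rewrite /dmt nmin_pair; move Hd : (minn p q - k)%N => d.
elim: d k Hd => [|d IH] k Hd Hk.
  have Hkm : k = minn p q by apply/eqP; rewrite eqn_leq Hk -subn_eq0 Hd.
  rewrite big_geq; last by rewrite Hkm.
  case: (leqP p q) => H.
    have E : minn p q = p by apply/minn_idPl.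
    by rewrite E in Hkm; rewrite Hkm subnn.
  have E : minn p q = q by apply/minn_idPr/ltnW.
  by rewrite E in Hkm; rewrite Hkm subnn muln0.

have Hk' : (k < minn p q)%N by rewrite -subn_gt0 Hd.
rewrite big_ltn ?ltnS // IH ?subnS ?Hd //.
rewrite cval_pair; move: Hk'; rewrite leq_min => /andP[Hp Hq].
znia.
Qed.

Lemma R3gen (b : seq nat) : b != [::] -> forall a k, (1 < size a)%N ->
  (k <= nmin (a ++ b))%N ->
  dmt (a ++ b) k = minl [seq dmt a j + dmt (j :: b) k | j <- iota k (nmin a - k).+1].
Proof.
elim/last_ind: b => [//|b' q IH] _ a k Hs Hk.
have Ha0 : a != [::] by case: (a) Hs.
move: (Hk); rewrite le_nmin; last by case: (a) Hs.
rewrite all_cat all_rcons => /and3P[Hka Hkq Hkb'].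
have HkA : (k <= nmin a)%N by rewrite le_nmin.
case: (altP (b' =P [::])) => [Eb|Hb'].
  subst b'; rewrite cats1 peel //; congr minl; apply/eq_in_map => j.
  rewrite mem_iota_rng // => /andP[Hkj _].
  by rewrite dmt_pair // leq_min Hkj.
rewrite -rcons_cat peel //; first last.
- by rewrite le_nmin ?all_cat ?Hka //; case: (a) Hs.
- by rewrite size_cat; apply: leq_trans Hs (leq_addr _ _).
set P := fun j' : nat => Posz ((j' - k) * (q - k)).
have HnAB : forall x, (x <= nmin (a ++ b'))%N = (x <= nmin a)%N && all (leq x) b'.
  by move=> x; rewrite !le_nmin ?all_cat //; case: (a) Hs.
have HnJB : forall x j, (x <= nmin (j :: b'))%N = (x <= j)%N && all (leq x) b'.
  by move=> x j; rewrite le_nmin.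
have HkAB : (k <= nmin (a ++ b'))%N by rewrite HnAB HkA.
have Hall_mono : forall x y, (x <= y)%N -> all (leq y) b' -> all (leq x) b'.
  by move=> x y Hxy /allP H; apply/allP => z Hz; apply: leq_trans Hxy (H z Hz).
have Hpj : forall j, (k <= j <= nmin a)%N ->
    dmt (j :: rcons b' q) k =
    minl [seq dmt (j :: b') j' + P j' | j' <- iota k (nmin (j :: b') - k).+1].
  move=> j /andP[Hkj _]; rewrite -rcons_cons peel //; last by rewrite HnJB Hkj.
  by case: (b') Hb'.
have HIH : forall j', (j' <= nmin (a ++ b'))%N ->
    dmt (a ++ b') j' = minl [seq dmt a j + dmt (j :: b') j' | j <- iota j' (nmin a - j').+1].
  by move=> j' Hj'; apply: IH.
symmetry; apply: minl_char.
- move=> x /mapP[j]; rewrite mem_iota_rng // => Hj ->.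
  case/andP: (Hj) => Hkj HjA.
  rewrite (Hpj j Hj).
  have [x0 /mapP[j0 Hj0 ->] ->] := @minl_ex [seq dmt (j :: b') j' + P j' | j' <- iota k (nmin (j :: b') - k).+1] isT.
  move: Hj0; rewrite mem_iota_rng; last by rewrite HnJB Hkj.
  case/andP=> Hkj0; rewrite HnJB => /andP[Hj0j Hj0b].
  have Hj0AB : (j0 <= nmin (a ++ b'))%N by rewrite HnAB Hj0b (leq_trans Hj0j HjA).
  have H1 : minl [seq dmt (a ++ b') j' + P j' | j' <- iota k (nmin (a ++ b') - k).+1]
            <= dmt (a ++ b') j0 + P j0.
    by apply: minl_le; apply: (map_f (fun j' => dmt (a ++ b') j' + P j')); rewrite mem_iota_rng // Hkj0.
  have H2 : dmt (a ++ b') j0 <= dmt a j + dmt (j :: b') j0.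
    rewrite HIH //; apply: minl_le; apply: (map_f (fun j => dmt a j + dmt (j :: b') j0)).
    by rewrite mem_iota_rng ?Hj0j // (leq_trans Hj0j HjA).
  move: H1 H2; zlia.
- have [x1 /mapP[j1 Hj1 ->] E1] := @minl_ex [seq dmt (a ++ b') j' + P j' | j' <- iota k (nmin (a ++ b') - k).+1] isT.
  move: Hj1; rewrite mem_iota_rng // => /andP[Hkj1 Hj1AB].
  move: (Hj1AB); rewrite HnAB => /andP[Hj1A Hj1b].
  have [x2 /mapP[j2 Hj2 ->] E2] := @minl_ex [seq dmt a j + dmt (j :: b') j1 | j <- iota j1 (nmin a - j1).+1] isT.
  move: Hj2; rewrite mem_iota_rng // => /andP[Hj1j2 Hj2A].
  have Hj2r : (k <= j2 <= nmin a)%N by rewrite Hj2A (leq_trans Hkj1 Hj1j2).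
  exists (dmt a j2 + dmt (j2 :: rcons b' q) k).
    by apply: (map_f (fun j => dmt a j + dmt (j :: rcons b' q) k)); rewrite mem_iota_rng.
  rewrite E1 (HIH j1 Hj1AB) E2 (Hpj j2 Hj2r).
  have H3 : minl [seq dmt (j2 :: b') j' + P j' | j' <- iota k (nmin (j2 :: b') - k).+1]
            <= dmt (j2 :: b') j1 + P j1.
    apply: minl_le; apply: (map_f (fun j' => dmt (j2 :: b') j' + P j')); rewrite mem_iota_rng; last by rewrite HnJB (leq_trans Hkj1 Hj1j2) (Hall_mono _ _ Hkj1 Hj1b).
    by rewrite Hkj1 HnJB Hj1j2 Hj1b.
  move: H3; zlia.
Qed.

Lemma R3main (N : nat) (n : seq nat) i k :
  (2 <= N)%N -> size n = N.+1 -> (1 <= i <= N.-1)%N -> (k <= nmin n)%N ->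
  dmt n k =
  minl [seq dmt (take i.+1 n) j + dmt (j :: drop i.+1 n) k
       | j <- iota k ((nmin (take i.+1 n)) - k).+1].
Proof.
move=> HN Hsz /andP[Hi1 HiN] Hk.
transitivity (dmt (take i.+1 n ++ drop i.+1 n) k); first by rewrite cat_take_drop.
have HiN' : (i.+1 < N.+1)%N by rewrite ltnS; case: (N) HN HiN => [|[|M]] //= _ H; apply: leq_trans H _.
apply: R3gen.
- by rewrite -size_eq0 size_drop Hsz subn_eq0 -ltnNge.
- by rewrite size_take Hsz HiN'.
- by rewrite cat_take_drop.
Qed.

Theorem theorem5 (N : nat) (n : seq nat) :
  (2 <= N)%N -> size n = N.+1 -> all (fun x => 0 < x)%N n ->
  (* (R1) *)
  (forall k : nat, (k <= nmin n)%N ->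
     dmt n k = dmt [seq (x - k)%N | x <- n] 0) /\
  (* (R2) *)
  (forall i : nat, (1 <= i <= N.-1)%N ->
     dmt n 0 =
     minl [seq dmt (take i.+1 n) j + dmt (j :: drop i.+1 n) 0
          | j <- iota 0 (nmin (take i.+1 n)).+1]) /\
  (* (R3) *)
  (forall i k : nat, (1 <= i <= N.-1)%N -> (k <= nmin n)%N ->
     dmt n k =
     minl [seq dmt (take i.+1 n) j + dmt (j :: drop i.+1 n) k
          | j <- iota k ((nmin (take i.+1 n)) - k).+1]).
Proof.
move=> HN Hsz _.
have Hs : (1 < size n)%N by rewrite Hsz ltnS; apply: leq_trans HN.
split; [|split].
- by move=> k Hk; rewrite dmt_shift // add0n.
- move=> i Hi; rewrite (R3main HN Hsz Hi (leq0n _)).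
  by rewrite subn0.
- by move=> i k Hi Hk; apply: (R3main HN Hsz Hi Hk).
Qed.
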